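(* Let $L\in\mathbb R^{N\times N}$ be symmetric positive semidefinite with eigenvalues $\lambda_1\le\cdots\le\lambda_N$ and orthonormal eigenvectors $u_1,\dots,u_N$. Let $P\in\mathbb R^{n\times N}$ have full row rank, $P^+$ its Moore–Penrose pseudoinverse, $\Pi=P^+P$, $\Pi^\perp = I-\Pi$, and $L_c = (P^+)^\top LP^+$. Let $i$ be an index with $\lambda_i>0$ and $\mathbf U_i=\mathrm{span}(u_1,\dots,u_i)$. If $L$ and $L_c$ are $(\mathbf U_i,\epsilon_i)$-similar, then $\|\Pi^\perp u_i\|_2^2\le\epsilon_i$.
   Context: For PSD $M$, $\|y\|_M=\sqrt{y^\top My}$. $L_c$ and $L$ are $(\mathbf R,\epsilon)$-similar if $\epsilon\ge0$ and $\|x-P^+Px\|_L\le\epsilon\|x\|_L$ for all $x\in\mathbf R$. *)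

(* Defs.v *)
From HB Require Import structures.
From mathcomp Require Import all_boot all_order all_algebra.
Set Implicit Arguments. Unset Strict Implicit. Unset Printing Implicit Defensive.
Import Order.TTheory GRing.Theory Num.Theory.
Local Open Scope ring_scope.

Definition qform (R : rcfType) (N : nat) (M : 'M[R]_N) (y : 'cV[R]_N) : R :=
  ((y^T *m M *m y) 0 0).

Definition mnorm (R : rcfType) (N : nat) (M : 'M[R]_N) (y : 'cV[R]_N) : R :=
  Num.sqrt (qform M y).

Definition norm2 (R : rcfType) (N : nat) (y : 'cV[R]_N) : R :=
  Num.sqrt ((y^T *m y) 0 0).

(* Pp is the Moore-Penrose pseudoinverse of P (the four Penrose conditions). *)
Definition is_pinv (R : rcfType) (n N : nat) (P : 'M[R]_(n, N)) (Pp : 'M[R]_(N, n)) : Prop :=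
  [/\ P *m Pp *m P = P, Pp *m P *m Pp = Pp,
      (P *m Pp)^T = P *m Pp & (Pp *m P)^T = Pp *m P].

Definition coarse_L (R : rcfType) (n N : nat) (L : 'M[R]_N) (Pp : 'M[R]_(N, n)) : 'M[R]_n :=
  Pp^T *m L *m Pp.

Definition Usimilar (R : rcfType) (n N : nat) (L : 'M[R]_N) (P : 'M[R]_(n, N))
  (Pp : 'M[R]_(N, n)) (U : 'cV[R]_N -> Prop) (eps : R) : Prop :=
  0 <= eps /\ forall x, U x -> mnorm L (x - Pp *m P *m x) <= eps * mnorm L x.

(* span(u_0, ..., u_i) (0-based indices) *)
Definition span_upto (R : rcfType) (N : nat) (u : 'I_N -> 'cV[R]_N) (i : 'I_N)
  (x : 'cV[R]_N) : Prop :=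
  exists c : 'I_N -> R, x = \sum_(j < N | (j <= i)%N) c j *: u j.

(* Main.v *)
Require Import Defs.
From HB Require Import structures.
From mathcomp Require Import all_boot all_order all_algebra.
From mathcomp Require Import ring lra.
Import Order.TTheory GRing.Theory Num.Theory.
Local Open Scope ring_scope.

Lemma sqnorm_ge0 (R : rcfType) (N : nat) (y : 'cV[R]_N) : 0 <= (y^T *m y) 0 0.
Proof.
rewrite !mxE; apply: sumr_ge0 => k _; rewrite mxE; by rewrite -expr2 sqr_ge0.
Qed.

Theorem lemma2 (R : rcfType) (n N : nat)
  (L : 'M[R]_N) (lambda : 'I_N -> R) (u : 'I_N -> 'cV[R]_N)
  (P : 'M[R]_(n, N)) (Pp : 'M[R]_(N, n)) (i : 'I_N) (eps : R) :
  L^T = L ->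
  (forall x : 'cV[R]_N, 0 <= qform L x) ->
  (forall j k : 'I_N, (j <= k)%N -> lambda j <= lambda k) ->
  (forall j k : 'I_N, ((u j)^T *m u k) 0 0 = (j == k)%:R) ->
  (forall j : 'I_N, L *m u j = lambda j *: u j) ->
  row_free P ->
  is_pinv P Pp ->
  0 < lambda i ->
  Usimilar L P Pp (span_upto u i) eps ->
  norm2 ((1%:M - Pp *m P) *m u i) ^+ 2 <= eps.
Proof.
move=> LT Lpsd _ uon Leig _ [_ h2 _ h4] lpos [eps0 Hsim].
set v := u i; set l := lambda i.
set Q := 1%:M - Pp *m P; set w := Q *m v.
have QT : Q^T = Q by rewrite /Q linearB /= trmx1 h4.
have QQ : Q *m Q = Q.
  rewrite /Q mulmxBl !mulmxBr !mul1mx !mulmx1.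
  by rewrite !mulmxA h2 subrr subr0.
have vL : v^T *m L = l *: v^T.
  by rewrite -{1}LT -trmx_mul Leig linearZ.
have vv : (v^T *m v) 0 0 = 1 by rewrite uon eqxx.
set c := (v^T *m w) 0 0.
have wwc : (w^T *m w) 0 0 = c.
  by rewrite /c /w trmx_mul mulmxA -(mulmxA _ _ Q) QT QQ mulmxA.
have c0 : 0 <= c by rewrite -wwc sqnorm_ge0.
have qv : qform L v = l.
  by rewrite /qform vL -scalemxAl mxE vv mulr1.
set qw := qform L w.
have qw0 : 0 <= qw by apply: Lpsd.
have key : qform L (c *: v - w) = qw - l * c ^+ 2.
  have eT : (c *: v - w)^T = c *: v^T - w^T by rewrite linearB linearZ.
  rewrite /qform eT !mulmxBl !mulmxBr.
  rewrite -!scalemxAl -!scalemxAr vL -!scalemxAl.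
  have wL : w^T *m L *m v = l *: (w^T *m v) by rewrite -mulmxA Leig -scalemxAr.
  rewrite wL.
  have wv : (w^T *m v) 0 0 = c.
    by rewrite /c /w trmx_mul -mulmxA QT.
  move: vv wv; rewrite /qw /qform.
  set M1 := v^T *m v; set M2 := v^T *m w; set M3 := w^T *m v; set M4 := w^T *m L *m w.
  rewrite !mxE => -> ->; rewrite /c -/M2.
  have -> : \sum_j v^T 0 j * w j 0 = M2 0 0 by rewrite /M2 mxE.
  move: (M2 0 0) (\sum_j (w^T *m L) 0 j * w j 0) => a b; ring.

have H1 : l * c ^+ 2 <= qw.
  by have := Lpsd (c *: v - w); rewrite key subr_ge0.
have Hv : span_upto u i v.
  exists (fun j => (j == i)%:R).
  rewrite (bigD1 i) //= eqxx scale1r big1 ?addr0 // => j /andP [_ /negbTE ->].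
  by rewrite scale0r.
have Hle : Num.sqrt qw <= eps * Num.sqrt l.
  have ew : v - Pp *m P *m v = w by rewrite /w /Q mulmxBl mul1mx.
  by have := Hsim v Hv; rewrite ew /mnorm qv.
have H2 : qw <= eps ^+ 2 * l.
  have hx : Num.sqrt qw \is Num.nneg by rewrite nnegrE sqrtr_ge0.
  have hy : eps * Num.sqrt l \is Num.nneg by rewrite nnegrE mulr_ge0 // sqrtr_ge0.
  have := lerXn2r 2 hx hy Hle.
  by rewrite exprMn !sqr_sqrtr // ltW.
rewrite /norm2 -/v -/Q -/w wwc sqr_sqrtr //.
have H3 : l * c ^+ 2 <= l * eps ^+ 2 by rewrite mulrC (mulrC l); lra.
rewrite ler_pM2l // in H3.
by rewrite -(ler_pXn2r (n:=2)) ?nnegrE.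
Qed.
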